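(* Let $m=n(n+1)/2$ and let $T:\mathcal{S}^n\to\mathbb{R}^m$ be the natural linear isomorphism (recording the entries on and above the diagonal) with $T(\mathcal{N}^n_+)=\mathbb{R}^m_+$. Then $\mathrm{Sem}(\mathcal{N}^n_+)$ is the set of all maps on $\mathcal{S}^n$ of the form $T^{-1}(YX^{-1})T$, where $X$ and $Y$ are entrywise positive $m\times m$ real matrices with $X$ invertible.
   Context: $\mathcal{S}^n$ denotes the space of real symmetric $n\times n$ matrices and $\mathcal{N}^n_+$ the cone of entrywise nonnegative matrices in $\mathcal{S}^n$; $\mathbb{R}^m_+$ is the nonnegative orthant. For a proper cone $K$ in a space $V$ with interior $K^{\circ}$, $\mathrm{Sem}(K)$ is the set of linear maps $L:V\to V$ for which there exists $x\in K^{\circ}$ with $L(x)\in K^{\circ}$. A matrix is entrywise positive if all its entries are strictly positive. *)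

(* Defs.v *)
From HB Require Import structures.
From mathcomp Require Import all_boot all_order all_algebra.
From mathcomp Require Import reals.
Set Implicit Arguments. Unset Strict Implicit. Unset Printing Implicit Defensive.
Import Order.TTheory GRing.Theory Num.Theory.
Local Open Scope ring_scope.

Section Defs.
Variable R : realType.
Variable n : nat.

Definition upper_pos : pred ('I_n * 'I_n) := fun p => (p.1 <= p.2)%N.

(* m = number of entries on and above the diagonal ( = n(n+1)/2 ). *)
Definition msize : nat := #|upper_pos|.

Definition is_symm (A : 'M[R]_n) : Prop := A^T = A.

(* The natural isomorphism T : S^n -> R^m, recording the entries on and above
   the diagonal (in the row-major / lexicographic order of enum). *)
Definition Tvec (A : 'M[R]_n) : 'cV[R]_msize :=
  \col_(k < msize) let p := enum_val k in A p.1 p.2.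

Definition sortpair (i j : 'I_n) : 'I_n * 'I_n :=
  if (i <= j)%N then (i, j) else (j, i).

Definition Tinv (v : 'cV[R]_msize) : 'M[R]_n :=
  \matrix_(i, j) \sum_(k < msize) (if enum_val k == sortpair i j then v k 0 else 0).

(* L is a linear map on S^n (represented by a function on n x n matrices,
   whose values off S^n are irrelevant). *)
Definition sym_linear (L : 'M[R]_n -> 'M[R]_n) : Prop :=
  (forall A, is_symm A -> is_symm (L A)) /\
  (forall (a : R) A B, is_symm A -> is_symm B -> L (a *: A + B) = a *: L A + L B).

(* interior of N^n_+ in S^n : symmetric entrywise positive matrices *)
Definition int_Nn (A : 'M[R]_n) : Prop := is_symm A /\ forall i j, 0 < A i j.

Definition Sem_Nn (L : 'M[R]_n -> 'M[R]_n) : Prop :=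
  exists x, int_Nn x /\ int_Nn (L x).

End Defs.

Definition entrywise_pos (R : realType) (p q : nat) (M : 'M[R]_(p, q)) : Prop :=
  forall i j, 0 < M i j.

(* Main.v *)
Require Import Defs.
From HB Require Import structures.
From mathcomp Require Import all_boot all_order all_algebra.
From mathcomp Require Import reals.
From mathcomp Require Import ring lra.
Import Order.TTheory GRing.Theory Num.Theory.
Local Open Scope ring_scope.

Section Helpers.
Variable R : realType.
Variable n : nat.
Local Notation m := (msize n).

Lemma sortpairC (i j : 'I_n) : sortpair i j = sortpair j i.
Proof.
rewrite /sortpair; case: (leqP i j) => h1; case: (leqP j i) => h2 //.
- have e : i = j by apply: val_inj; apply/eqP; rewrite eqn_leq h1 h2.
  by rewrite e.
- exfalso; move: (ltn_trans h1 h2); by rewrite ltnn.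
Qed.

Lemma sortpair_up (i j : 'I_n) : sortpair i j \in @upper_pos n.
Proof.
rewrite /sortpair; case: (leqP i j) => h; rewrite unfold_in /upper_pos //=.
exact: ltnW.
Qed.

Lemma sortpair_ex (i j : 'I_n) : exists k : 'I_m, enum_val k = sortpair i j.
Proof.
exists (enum_rank_in (sortpair_up i j) (sortpair i j)).
by rewrite enum_rankK_in // sortpair_up.
Qed.

Lemma Tinv_entry (v : 'cV[R]_m) {i j : 'I_n} {k : 'I_m} :
  enum_val k = sortpair i j -> Tinv v i j = v k 0.
Proof.
move=> ek; rewrite mxE (bigD1 k) //= ek eqxx big1 ?addr0 // => k' nk.
case: eqP => // e; exfalso; move/negP: nk; apply; apply/eqP.
by apply: enum_val_inj; rewrite e ek.
Qed.

Lemma Tinv_sym (v : 'cV[R]_m) : is_symm (Tinv v).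
Proof.
by apply/matrixP => i j; rewrite !mxE; apply: eq_bigr => k _; rewrite sortpairC.
Qed.

Lemma TvecK (v : 'cV[R]_m) : Tvec (Tinv v) = v.
Proof.
apply/matrixP => k z; rewrite (ord1 z) mxE.
apply: Tinv_entry.
have := enum_valP k; rewrite unfold_in /upper_pos /sortpair => ->.
by case: (enum_val k).
Qed.

Lemma TinvK (A : 'M[R]_n) : is_symm A -> Tinv (Tvec A) = A.
Proof.
move=> hA; apply/matrixP => i j.
have [k ek] := sortpair_ex i j.
rewrite (Tinv_entry _ ek) mxE ek /sortpair.
case: leqP => // _ /=.
by have := congr1 (fun M : 'M[R]_n => M i j) hA; rewrite mxE.
Qed.

Lemma Tinv_lin (a : R) (v w : 'cV[R]_m) :
  Tinv (a *: v + w) = a *: Tinv v + Tinv w.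
Proof.
apply/matrixP => i j.
have [k ek] := sortpair_ex i j.
by rewrite [in RHS]mxE [in RHS]mxE !(Tinv_entry _ ek) !mxE.
Qed.

Lemma Tvec_lin (a : R) (A B : 'M[R]_n) :
  Tvec (a *: A + B) = a *: Tvec A + Tvec B.
Proof. by apply/matrixP => k z; rewrite !mxE /= !mxE. Qed.

Lemma Tinv_pos (v : 'cV[R]_m) : (forall k, 0 < v k 0) -> forall i j, 0 < Tinv v i j.
Proof.
move=> hv i j; have [k ek] := sortpair_ex i j.
by rewrite (Tinv_entry _ ek).
Qed.

End Helpers.

Lemma lin_cV (R : realType) (p q : nat) (f : 'cV[R]_p -> 'cV[R]_q) :
  (forall a x y, f (a *: x + y) = a *: f x + f y) ->
  forall v, f v = (\matrix_(i, j) f (delta_mx j 0) i 0) *m v.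
Proof.
move=> hf.
have f0 : f 0 = 0.
  have h := hf 1 0 0; rewrite scaler0 addr0 scale1r in h.
  by move/eqP: h; rewrite -subr_eq subrr eq_sym => /eqP.
have fadd : forall x y, f (x + y) = f x + f y.
  by move=> x y; rewrite -[x in LHS]scale1r hf scale1r.
have fscale : forall a x, f (a *: x) = a *: f x.
  by move=> a x; rewrite -[a *: x]addr0 hf f0 addr0.
move=> v.
have ev : v = \sum_(j < p) v j 0 *: delta_mx j 0.
  apply/matrixP => i z; rewrite (ord1 z) summxE (bigD1 i) //= !mxE !eqxx mulr1.
  rewrite big1 ?addr0 // => j nj; rewrite !mxE eq_sym (negbTE nj) /=.
  by rewrite mulr0.
rewrite {1}ev (big_morph f fadd f0).
apply/matrixP => i z; rewrite (ord1 z) !mxE summxE; apply: eq_bigr => j _.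
by rewrite fscale !mxE mulrC.
Qed.

Lemma pos_mul1 (R : realType) (p : nat) (M : 'M[R]_p) :
  entrywise_pos M -> forall k, 0 < (M *m (const_mx 1 : 'cV[R]_p)) k 0.
Proof.
move=> hM k; rewrite mxE (bigD1 k) //= mxE mulr1.
have h1 := hM k k.
have h2 : 0 <= \sum_(i < p | i != k) M k i * (const_mx 1 : 'cV[R]_p) i 0.
  by apply: sumr_ge0 => i _; rewrite mxE mulr1 ltW.
lra.
Qed.

Lemma rank1_entry (R : realType) (p : nat) (A : 'M[R]_p) (t : R) (v : 'cV[R]_p) i j :
  (A + t *: (v *m const_mx 1)) i j = A i j + t * v i 0.
Proof. by rewrite !mxE big_ord1 !mxE mulr1. Qed.

Lemma X_entry (R : realType) (p : nat) (t : R) (v : 'cV[R]_p) i j :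
  ((1%:M : 'M[R]_p) + t *: (v *m const_mx 1)) i j = (i == j)%:R + t * v i 0.
Proof. by rewrite rank1_entry mxE. Qed.

Theorem mainTheorem8 (R : realType) (n : nat) (L : 'M[R]_n -> 'M[R]_n) :
  sym_linear L ->
  (Sem_Nn L <->
   exists X Y : 'M[R]_(msize n),
     [/\ X \in unitmx, entrywise_pos X, entrywise_pos Y &
         forall A : 'M[R]_n, is_symm A -> L A = Tinv (Y *m invmx X *m Tvec A)]).
Proof.
move=> [hLs hLl]; split.
- move=> [x [[hxs hxp] [hLxs hLxp]]].
  set L' := fun v : 'cV[R]_(msize n) => Tvec (L (Tinv v)).
  have Llin : forall a v w, L' (a *: v + w) = a *: L' v + L' w.
    move=> a v w; rewrite /L' Tinv_lin hLl; last 2 first.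
    - exact: Tinv_sym.
    - exact: Tinv_sym.
    by rewrite Tvec_lin.
  set M := \matrix_(i, j) L' (delta_mx j 0) i 0.
  have hM : forall v, L' v = M *m v.
    by move=> v0; rewrite (@lin_cV _ _ _ L' Llin v0).
  set u := Tvec x.
  have upos : forall k, 0 < u k 0 by move=> k; rewrite mxE.
  have Mupos : forall k, 0 < (M *m u) k 0.
    by move=> k; rewrite -hM /L' /u TinvK // mxE.
  set t := 1 + \sum_i \sum_j `|M i j| / (M *m u) i 0.
  have tge : forall i j, 1 + `|M i j| / (M *m u) i 0 <= t.
    move=> i j; rewrite /t lerD2l (bigD1 i) //= (bigD1 j) //=.
    have h1 : 0 <= \sum_(j0 < msize n | j0 != j) `|M i j0| / (M *m u) i 0.
      by apply: sumr_ge0 => k _; apply: divr_ge0 => //; apply: ltW.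
    have h2 : 0 <= \sum_(i0 < msize n | i0 != i)
                    \sum_j `|M i0 j| / (M *m u) i0 0.
      apply: sumr_ge0 => k _; apply: sumr_ge0 => l _.
      by apply: divr_ge0 => //; apply: ltW.
    lra.
  have tpos : 0 < t.
    rewrite /t.
    have : 0 <= \sum_i \sum_j `|M i j| / (M *m u) i 0.
      apply: sumr_ge0 => k _; apply: sumr_ge0 => l _.
      by apply: divr_ge0 => //; apply: ltW.
    lra.
  set r := const_mx (1 : R) : 'rV[R]_(msize n).
  set P := u *m r.
  set s := (r *m u) 0 0.
  have s0 : 0 <= s.
    rewrite /s mxE; apply: sumr_ge0 => k _; rewrite mxE mul1r; exact: ltW.
  have PP : P *m P = s *: P.
    by rewrite /P mulmxA -(mulmxA u r u) [r *m u]mx11_scalar mul_mx_scalar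
               scalemxAl.
  set X := 1%:M + t *: P.
  set c := t / (1 + t * s).
  have hc : t - c - t * (c * s) = 0.
    have hd : 1 + t * s != 0.
      rewrite gt_eqF //; have : 0 <= t * s by apply: mulr_ge0 => //; apply: ltW.
      lra.
    rewrite /c; field => //.
  have XU : X *m (1%:M - c *: P) = 1%:M.
    rewrite /X mulmxDl !mulmxBr !mul1mx !mulmx1 -!scalemxAl -!scalemxAr PP.
    rewrite !scalerA.
    rewrite -scalerBl -addrA -scaleNr -scalerDl.
    have -> : - c + (t - t * c * s) = 0 by rewrite -hc; ring.
    by rewrite scale0r addr0.
  have Xu : X \in unitmx by case: (mulmx1_unit XU).
  exists X, (M *m X); split => //.
  + move=> i j; rewrite /X /P /r X_entry.
    have := upos i; have : 0 <= ((i == j)%:R : R) by case: (i == j).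
    move=> h1 h2; have := mulr_gt0 tpos h2; lra.
  + move=> i j.
    rewrite /X mulmxDr mulmx1 -scalemxAr /P mulmxA.
    rewrite /r rank1_entry.
    have h1 := tge i j; have h2 := Mupos i.
    have /andP[h3 h4] : - `|M i j| <= M i j <= `|M i j| by rewrite -ler_norml.
    have h5 : `|M i j| / (M *m u) i 0 * (M *m u) i 0 = `|M i j|.
      by rewrite divfK // gt_eqF.
    set a := (M *m u) i 0 in h1 h2 h5 *.
    set q := `|M i j| / a in h1 h5.
    have : (1 + q) * a <= t * a by rewrite ler_pM2r.
    nra.
  + move=> A hA.
    rewrite mulmxK // -hM /L' TinvK; last by apply: hLs; apply: Tinv_sym.
    by rewrite TinvK.
- move=> [X [Y [hX hXp hYp hL]]].
  set u := X *m (const_mx 1 : 'cV[R]_(msize n)).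
  exists (Tinv u); split.
  + split; first exact: Tinv_sym.
    by apply: Tinv_pos => k; apply: pos_mul1.
  + rewrite hL; last exact: Tinv_sym.
    rewrite TvecK /u mulmxA -(mulmxA Y (invmx X) X) (mulVmx hX) mulmx1.
    split; first exact: Tinv_sym.
    by apply: Tinv_pos => k; apply: pos_mul1.
Qed.
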